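(* Let $n>0$ be an integer. Let $(\pi_i)_{-n<i<n}$ be arbitrary probabilities in $[0,1]$. Consider the Markov chain $X_0,X_1,\ldots$ on $\{-n,\ldots,n\}$ with reflecting barriers, whose transition probabilities are $$p_{-n,-n+1}=p_{n,n-1}=1,\qquad p_{i,i+1}=\pi_i,\quad p_{i,i-1}=1-\pi_i\quad(-n<i<n).$$ All other transition probabilities are $0$. For states $i,j$, let $T_{i,j}=\min\{t>0: X_t=j\}$ be the hitting time of $j$ when the chain is started at $X_0=i$. Then $$\max\left(\mathrm{E}\{T_{0,n}\},\mathrm{E}\{T_{0,-n}\}\right)\ge \frac{2}{3}n^2.$$
   Context: Expectations may be infinite. *)

(* Defs.v *)
From HB Require Import structures.
From mathcomp Require Import all_boot all_order all_algebra.
From mathcomp Require Import all_classical all_reals all_analysis.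
Set Implicit Arguments. Unset Strict Implicit. Unset Printing Implicit Defensive.
Import Order.TTheory GRing.Theory Num.Theory.
Local Open Scope ring_scope.

Definition states (n : nat) : seq int :=
  [seq (k%:Z - n%:Z) | k <- iota 0 (n.*2.+1)].

Definition trans (R : nzRingType) (n : nat) (pi : int -> R) (x y : int) : R :=
  if x == - n%:Z then (y == - n%:Z + 1)%:R
  else if x == n%:Z then (y == n%:Z - 1)%:R
  else if y == x + 1 then pi x
  else if y == x - 1 then 1 - pi x
  else 0.

(* mass n pi i j t y = P_i( X_t = y and X_s <> j for all 0 < s <= t ). *)
Fixpoint mass (R : nzRingType) (n : nat) (pi : int -> R) (i j : int) (t : nat)
  : int -> R :=
  match t with
  | 0 => fun y => (y == i)%:R
  | t'.+1 => fun y =>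
      if y == j then 0
      else \sum_(x <- states n) mass n pi i j t' x * trans n pi x y
  end.

(* P_i( T_{i,j} > t ), where T_{i,j} = min {t > 0 : X_t = j}. *)
Definition surv (R : nzRingType) (n : nat) (pi : int -> R) (i j : int) (t : nat) : R :=
  \sum_(y <- states n) mass n pi i j t y.

(* E{T_{i,j}} = \sum_{t >= 0} P(T_{i,j} > t) in [0, +oo]
   (equals +oo when T_{i,j} = oo with positive probability). *)
Definition expected_hitting_time (R : realType) (n : nat) (pi : int -> R)
  (i j : int) : \bar R :=
  (\sum_(0 <= t <oo) (surv n pi i j t)%:E)%E.

(* Main.v *)
Require Import Defs.
From HB Require Import structures.
From mathcomp Require Import all_boot all_order all_algebra.
From mathcomp Require Import all_classical all_reals all_analysis.
From mathcomp Require Import zify ring lra.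
Import Order.TTheory GRing.Theory Num.Theory.
Local Open Scope ring_scope.
Set Implicit Arguments. Unset Strict Implicit. Unset Printing Implicit Defensive.
Lemma mem_states n (x : int) : (x \in states n) = (- n%:Z <= x <= n%:Z).
Proof.
apply/mapP/idP.
  move=> [k]; rewrite mem_iota => /andP[_ hk] ->; lia.
move=> hx; exists (absz (x + n%:Z)); rewrite ?mem_iota; lia.
Qed.
Lemma uniq_states n : uniq (states n).
Proof. rewrite map_inj_uniq ?iota_uniq // => a b h; lia. Qed.
Lemma sum_ind (R : nzRingType) n (a : int) (F : int -> R) : a \in states n ->
  \sum_(y <- states n) (y == a)%:R * F y = F a.
Proof.
move=> ha; rewrite (bigD1_seq a) ?uniq_states //= eqxx mul1r big1 ?addr0 //.
by move=> y /negbTE ->; rewrite mul0r.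
Qed.
Lemma sum_opp (R : nzRingType) n (F : int -> R) :
  \sum_(x <- states n) F (- x) = \sum_(x <- states n) F x.
Proof.
rewrite -(big_map (fun x => - x) predT F); apply: perm_big.
apply: uniq_perm; first by rewrite map_inj_uniq ?uniq_states //; exact: oppr_inj.
  exact: uniq_states.
move=> x; rewrite -[x in LHS]opprK mem_map; last exact: oppr_inj.
rewrite !mem_states; lia.
Qed.
Definition piok (R : realType) n (pi : int -> R) :=
  forall i : int, - n%:Z < i < n%:Z -> 0 <= pi i <= 1.
Lemma trans_ge0 (R : realType) n (pi : int -> R) x y : piok n pi ->
  x \in states n -> 0 <= trans n pi x y.
Proof.
move=> hp; rewrite mem_states => hx; rewrite /trans.
case: eqP => [_|hxn]; first by rewrite ler0n.
case: eqP => [_|hxp]; first by rewrite ler0n.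
have /andP[h0 h1] : 0 <= pi x <= 1 by apply: hp; lia.
case: eqP => _ //; case: eqP => _ //; by rewrite subr_ge0.
Qed.
Definition piR (R : realType) (pi : int -> R) := fun x : int => 1 - pi (- x).
Lemma piR_ok (R : realType) n (pi : int -> R) : piok n pi -> piok n (piR pi).
Proof.
move=> hp i hi; have /andP[h0 h1] : 0 <= pi (- i) <= 1 by apply: hp; lia.
rewrite /piR; apply/andP; split; lra.
Qed.
Lemma trans_sym (R : realType) n (pi : int -> R) x y : (0 < n)%N ->
  trans n (piR pi) x y = trans n pi (- x) (- y).
Proof.
move=> hn; rewrite /trans /piR.
have e1 : (- x == - n%:Z) = (x == n%:Z) by rewrite eqr_opp.
have e2 : (- x == n%:Z) = (x == - n%:Z) by rewrite eqr_oppLR.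
have e3 : (- y == - n%:Z + 1) = (y == n%:Z - 1) by apply/eqP/eqP; lia.
have e4 : (- y == n%:Z - 1) = (y == - n%:Z + 1) by apply/eqP/eqP; lia.
have e5 : (- y == - x + 1) = (y == x - 1) by apply/eqP/eqP; lia.
have e6 : (- y == - x - 1) = (y == x + 1) by apply/eqP/eqP; lia.
rewrite e1 e2 e3 e4 e5 e6.
case: (x =P - n%:Z) => [->|hx1].
  by have -> : (- n%:Z == n%:Z) = false by apply/eqP; lia.
case: (x =P n%:Z) => // hx2.
case: (y =P x + 1) => [->|hy1].
  by have -> : (x + 1 == x - 1) = false by apply/eqP; lia.
case: (y =P x - 1) => // _; ring.
Qed.
Lemma mass_ge0 (R : realType) n (pi : int -> R) i j t y : piok n pi ->
  0 <= mass n pi i j t y.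
Proof.
move=> hp; elim: t y => [|t IH] y /=; first by rewrite ler0n.
case: eqP => _ //; rewrite big_seq; apply: sumr_ge0 => x hx.
by apply: mulr_ge0 => //; apply: trans_ge0.
Qed.
Lemma mass_j (R : realType) n (pi : int -> R) i j t : i != j ->
  mass n pi i j t j = 0.
Proof. by move=> hij; case: t => [|t] /=; rewrite ?eqxx // eq_sym (negbTE hij). Qed.
Lemma mass_sym (R : realType) n (pi : int -> R) i j t y : (0 < n)%N ->
  mass n (piR pi) (- i) (- j) t (- y) = mass n pi i j t y.
Proof.
move=> hn; elim: t y => [|t IH] y /=; first by rewrite eqr_opp.
rewrite eqr_opp; case: eqP => _ //.
rewrite -sum_opp; apply: eq_bigr => x _.
by rewrite IH trans_sym // !opprK.
Qed.
Lemma ET_sym (R : realType) n (pi : int -> R) j : (0 < n)%N ->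
  expected_hitting_time n (piR pi) 0 (- j) = expected_hitting_time n pi 0 j.
Proof.
move=> hn; rewrite /expected_hitting_time; apply: eq_eseriesr => t _.
congr (_%:E); rewrite /surv -sum_opp.
by apply: eq_bigr => y _; rewrite -{1}oppr0 mass_sym.
Qed.
Lemma real_lim (R : realType) (P : nat -> R) (a r M : R) :
  0 <= M -> P 0%N = 0 -> (forall t, P t <= r) ->
  (forall t, a <= P t + M * (P t.+1 - P t)) -> a <= r.
Proof.
move=> hM hP0 hPr ha.
have Q : forall T : nat, T%:R * a <= T%:R * r + M * P T.
  elim=> [|T IH]; first by rewrite hP0 !mul0r mulr0 addr0.
  have := ha T; have := hPr T; rewrite -natr1 !mulrDl !mul1r; nra.
have hr : 0 <= r by rewrite -hP0.
rewrite leNgt; apply/negP => har.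
have hx : 0 <= M * r / (a - r) by apply: divr_ge0; [exact: mulr_ge0|lra].
have := archi_boundP hx; set T := Num.Def.archi_bound _ => hT.
have := Q T; have := hPr T => h1 h2.
have : T%:R * (a - r) <= M * r by nra.
rewrite leNgt => /negP; apply.
by rewrite -ltr_pdivrMr ?subr_gt0.
Qed.
Lemma pot (R : realType) n (pi : int -> R) i j (g : int -> R) (M : R) :
  piok n pi -> i \in states n -> i != j -> g j = 0 -> 0 <= M ->
  (forall x, x \in states n -> g x <= M) ->
  (forall x, x \in states n -> x != j ->
     g x - 1 <= \sum_(y <- states n) trans n pi x y * g y) ->
  ((g i)%:E <= expected_hitting_time n pi i j)%E.
Proof.
move=> hp hi hij hgj hM hgM hdrift.
pose S t := \sum_(y <- states n) mass n pi i j t y * g y.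
pose sv t := surv n pi i j t.
have sv0 : forall t, 0 <= sv t.
  by move=> t; apply: sumr_ge0 => y _; apply: mass_ge0.
have step : forall t, S t - sv t <= S t.+1.
  move=> t.
  have -> : S t.+1 = \sum_(y <- states n)
      (\sum_(x <- states n) mass n pi i j t x * trans n pi x y) * g y.
    apply: eq_bigr => y _ /=; case: eqP => [->|_] //.
    by rewrite hgj !mulr0.
  under eq_bigr do rewrite big_distrl /=.
  rewrite exchange_big /=.
  have -> : S t - sv t = \sum_(x <- states n) mass n pi i j t x * (g x - 1).
    rewrite /S /sv /surv -sumrB; apply: eq_bigr => x _; ring.
  rewrite big_seq [X in _ <= X]big_seq; apply: ler_sum => x hx.
  under eq_bigr do rewrite -mulrA.
  rewrite -big_distrr /=.
  case: (x =P j) => [->|/eqP hxj]; first by rewrite mass_j // !mul0r.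
  by apply: ler_wpM2l; [apply: mass_ge0|apply: hdrift].
pose P t := \sum_(0 <= s < t) sv s.
have cum : forall t, g i - P t <= S t.
  elim=> [|t IH].
    rewrite /P big_geq // subr0 /S /=.
    rewrite (eq_bigr (fun y => (y == i)%:R * g y)) ?sum_ind //.
  rewrite /P big_nat_recr //= -/(P t); have := step t; lra.
have SM : forall t, S t <= M * sv t.
  move=> t; rewrite /sv /surv big_distrr /= /S big_seq [X in _ <= X]big_seq.
  apply: ler_sum => y hy; rewrite mulrC; apply: ler_wpM2r; first exact: mass_ge0.
  exact: hgM.
have PE : forall t, ((P t)%:E <= expected_hitting_time n pi i j)%E.
  move=> t; rewrite /P -sumEFin; apply: nneseries_lim_ge => k _ _.
  by rewrite lee_fin.
case E : (expected_hitting_time n pi i j) => [r| |]; last 2 first.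
- by rewrite leey.
- by have := PE 0%N; rewrite E /P big_geq.
rewrite lee_fin; apply: (@real_lim _ P _ _ M) => //.
- by rewrite /P big_geq.
- by move=> t; have := PE t; rewrite E lee_fin.
- move=> t; have -> : P t.+1 - P t = sv t by rewrite /P big_nat_recr //=; ring.
  have := cum t; have := SM t; lra.
Qed.
Definition st (n m : nat) : int := m%:Z - n%:Z.
Fixpoint ee (R : realType) n (pi : int -> R) (K : R) (m : nat) : R :=
  match m with
  | 0 => 1
  | m'.+1 => if pi (st n m'.+1) == 0 then K
             else (1 + (1 - pi (st n m'.+1)) * ee n pi K m') / pi (st n m'.+1)
  end.
Definition gR (R : realType) n (pi : int -> R) (K : R) (x : int) : R :=
  \sum_(0 <= m < n.*2 | x + n%:Z <= m%:Z) ee n pi K m.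
Lemma ee_ge0 (R : realType) n (pi : int -> R) K m : piok n pi -> 0 <= K ->
  (m < n.*2)%N -> 0 <= ee n pi K m.
Proof.
move=> hp hK; elim: m => [|m IH] hm /=; first exact: ler01.
case: eqP => // hp0.
have /andP[h0 h1] : 0 <= pi (st n m.+1) <= 1 by apply: hp; rewrite /st; lia.
have hpos : 0 < pi (st n m.+1) by rewrite lt_def h0 andbT; apply/eqP.
have := IH (ltnW hm) => he.
apply: divr_ge0; last exact: h0.
by apply: addr_ge0 => //; apply: mulr_ge0 => //; lra.
Qed.
Lemma gR_step (R : realType) n (pi : int -> R) K k : (k < n.*2)%N ->
  gR n pi K (st n k) = ee n pi K k + gR n pi K (st n k + 1).
Proof.
move=> hk; rewrite /gR !(big_mkcond (fun m => _ <= _)) /=.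
have hin : k \in index_iota 0 n.*2 by rewrite mem_index_iota.
rewrite (bigD1_seq k) ?iota_uniq //= (bigD1_seq k _ (iota_uniq _ _)) //=.
have -> : (st n k + n%:Z <= k%:Z) = true by rewrite /st; lia.
have -> : (st n k + 1 + n%:Z <= k%:Z) = false by rewrite /st; lia.
rewrite add0r; congr (_ + _); apply: eq_bigr => m hm.
have -> : (st n k + n%:Z <= m%:Z) = (st n k + 1 + n%:Z <= m%:Z) => //.
move: hm; rewrite /st; move/eqP => hm; apply/idP/idP; lia.
Qed.
Lemma gR_n (R : realType) n (pi : int -> R) K : gR n pi K n%:Z = 0.
Proof.
rewrite /gR big_nat_cond big1 // => m /andP[/andP[_ hm] hc]; exfalso; lia.
Qed.
Lemma gR_le (R : realType) n (pi : int -> R) K x : piok n pi -> 0 <= K ->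
  gR n pi K x <= \sum_(0 <= m < n.*2) ee n pi K m.
Proof.
move=> hp hK; rewrite /gR big_mkcond /=; apply: ler_sum_nat => m /andP[_ hm].
by case: ifP => _ //; apply: ee_ge0.
Qed.
Lemma sum_trans_int (R : realType) n (pi : int -> R) x (g : int -> R) :
  - n%:Z < x < n%:Z ->
  \sum_(y <- states n) trans n pi x y * g y =
  pi x * g (x + 1) + (1 - pi x) * g (x - 1).
Proof.
move=> hx.
have h1 : x + 1 \in states n by rewrite mem_states; lia.
have h2 : x - 1 \in states n by rewrite mem_states; lia.
rewrite -(sum_ind (fun y => pi x * g y) h1) -(sum_ind (fun y => (1 - pi x) * g y) h2).
rewrite -big_split /=; apply: eq_bigr => y _; rewrite /trans.
have -> : (x == - n%:Z) = false by apply/eqP; lia.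
have -> : (x == n%:Z) = false by apply/eqP; lia.
case: (y =P x + 1) => [->|_].
  have -> : (x + 1 == x - 1) = false by apply/eqP; lia.
  by rewrite mul1r mul0r addr0.
case: (y =P x - 1) => [->|_]; first by rewrite mul0r add0r mul1r.
by rewrite !mul0r addr0.
Qed.
Lemma ER_bound (R : realType) n (pi : int -> R) K : (0 < n)%N -> piok n pi -> 0 <= K ->
  ((gR n pi K 0)%:E <= expected_hitting_time n pi 0 n%:Z)%E.
Proof.
move=> hn hp hK.
apply: (pot (M := \sum_(0 <= m < n.*2) ee n pi K m)) => //.
- by rewrite mem_states; lia.
- by apply/eqP; lia.
- exact: gR_n.
- rewrite big_seq_cond; apply: sumr_ge0 => m /andP[hm _].
  by rewrite mem_index_iota in hm; apply: ee_ge0.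
- by move=> x _; apply: gR_le.
move=> x; rewrite mem_states => hx /eqP hxn.
have -> : x = st n (absz (x + n%:Z)) by rewrite /st; lia.
have : (absz (x + n%:Z)%R < n.*2)%N by lia.
case: (absz (x + n%:Z)) => [|k] hk.
  have hin : - n%:Z + 1 \in states n by rewrite mem_states; lia.
  rewrite (eq_bigr (fun y => (y == - n%:Z + 1)%:R * gR n pi K y)); last first.
    move=> y _; rewrite /trans /st sub0r eqxx; done.
  rewrite sum_ind // gR_step //= /st sub0r; lra.
rewrite sum_trans_int; last by rewrite /st; lia.
have hg : gR n pi K (st n k.+1) = ee n pi K k.+1 + gR n pi K (st n k.+1 + 1).
  exact: gR_step.
have -> : st n k.+1 - 1 = st n k by rewrite /st; lia.
rewrite (@gR_step _ _ _ _ k); last by lia.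
have -> : st n k + 1 = st n k.+1 by rewrite /st; lia.
rewrite hg.
have he : 0 <= ee n pi K k by apply: ee_ge0 => //; lia.
have /andP[h0 h1] : 0 <= pi (st n k.+1) <= 1 by apply: hp; rewrite /st; lia.
have key : pi (st n k.+1) * ee n pi K k.+1 <= 1 + (1 - pi (st n k.+1)) * ee n pi K k.
  rewrite [ee n pi K k.+1]/=; case: eqP => [->|hp0]; first by rewrite mul0r; lra.
  by rewrite mulrC divfK //; apply/eqP.
set G := gR n pi K (st n k.+1 + 1); set p := pi (st n k.+1) in key h0 h1 *.
set E1 := ee n pi K k.+1 in key *; set e := ee n pi K k in key he *.
nra.
Qed.

Lemma sum_ge_term (R : realType) (r : seq nat) (P : pred nat) (F : nat -> R) k :
  uniq r -> k \in r -> P k -> (forall i, i \in r -> P i -> 0 <= F i) ->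
  F k <= \sum_(i <- r | P i) F i.
Proof.
move=> ur kr Pk hF; rewrite big_mkcond /= (bigD1_seq k) //= Pk lerDl.
rewrite big_seq_cond; apply: sumr_ge0 => i /andP[ir _]; case: ifP => // Pi.
exact: hF.
Qed.
Lemma ee_chain (R : realType) n (pi : int -> R) K m0 : piok n pi -> 0 <= K ->
  (0 < m0)%N -> pi (st n m0) = 0 -> forall m, (m0 <= m < n.*2)%N ->
  K * \prod_(m0.+1 <= l < m.+1) (1 - pi (st n l)) <= ee n pi K m.
Proof.
move=> hp hK hm0 hpi0; elim=> [|m IH] /andP[h1 h2]; first by exfalso; lia.
case: (ltngtP m0 m.+1) => [hlt|hgt|heq]; last 2 first.
- by exfalso; lia.
- move: hpi0; rewrite heq /= => ->; rewrite eqxx big_geq ?mulr1 //; lia.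
have hq : forall l, (m0.+1 <= l < m.+2)%N -> 0 <= 1 - pi (st n l) <= 1.
  move=> l hl; have /andP[a b] : 0 <= pi (st n l) <= 1 by apply: hp; rewrite /st; lia.
  apply/andP; split; lra.
rewrite big_nat_recr /=; last by lia.
have /andP[q0 q1] := hq m.+1 (ltac:(lia)).
have hP0 : 0 <= \prod_(m0.+1 <= l < m.+1) (1 - pi (st n l)).
  rewrite big_seq_cond; apply: prodr_ge0 => l /andP[hl _].
  by rewrite mem_index_iota in hl; have /andP[] := hq l (ltac:(lia)).
have hP1 : \prod_(m0.+1 <= l < m.+1) (1 - pi (st n l)) <= 1.
  rewrite big_seq_cond; apply: prodr_ile1 => l /andP[hl _].
  by rewrite mem_index_iota in hl; apply: hq; lia.
have IH' := IH (ltac:(lia)).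
have he : 0 <= ee n pi K m by apply: ee_ge0 => //; lia.
set P := \prod_(_ <= _ < _) _ in hP0 hP1 IH' *.
set q := 1 - pi (st n m.+1) in q0 q1 *.
case: eqP => [_|hp0].
  by apply: ler_piMr => //; nra.
have /andP[p0 p1] : 0 <= pi (st n m.+1) <= 1 by apply: hp; rewrite /st; lia.
set p := pi (st n m.+1) in hp0 p0 p1 *.
have hX : p * ((1 + q * ee n pi K m) / p) = 1 + q * ee n pi K m.
  by rewrite mulrC divfK //; apply/eqP.
have hX0 : 0 <= (1 + q * ee n pi K m) / p.
  by apply: divr_ge0 => //; nra.
set X := (_ / p) in hX hX0 *.
nra.
Qed.
Lemma degen (R : realType) n (pi : int -> R) m0 V : (0 < n)%N -> piok n pi ->
  (0 < m0 < n.*2)%N -> pi (st n m0) = 0 ->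
  (forall l, (m0 < l <= n)%N -> pi (st n l) != 1) -> 0 <= V ->
  exists K, 0 <= K /\ V <= gR n pi K 0.
Proof.
move=> hn hp hm0 hpi0 hq hV.
set m := maxn m0 n.
set Pm := \prod_(m0.+1 <= l < m.+1) (1 - pi (st n l)).
have hPm : 0 < Pm.
  rewrite /Pm big_seq_cond; apply: prodr_gt0 => l /andP[hl _].
  rewrite mem_index_iota in hl.
  have /andP[a b] : 0 <= pi (st n l) <= 1 by apply: hp; rewrite /st; lia.
  have := hq l (ltac:(lia)) => hne; rewrite subr_gt0 lt_def eq_sym hne; done.
exists (V / Pm); split; first exact: divr_ge0 (ltW hPm).
have hK : 0 <= V / Pm by exact: divr_ge0 (ltW hPm).
apply: le_trans (_ : ee n pi (V / Pm) m <= _).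
  apply: le_trans (ee_chain hp hK _ hpi0 _); first by rewrite divfK ?gt_eqF.
    lia.
  lia.
rewrite /gR; apply: (sum_ge_term (F := ee n pi (V / Pm))).
- exact: iota_uniq.
- rewrite mem_index_iota; lia.
- rewrite /=; lia.
- by move=> i; rewrite mem_index_iota => hi _; apply: ee_ge0.
Qed.
Lemma ee_formula (R : realType) n (pi : int -> R) K (c : nat -> R) :
  (forall k, (0 < k < n.*2)%N -> pi (st n k) != 0) ->
  (forall k, (0 < k < n.*2)%N -> c k * (1 - pi (st n k)) = c k.-1 * pi (st n k)) ->
  forall m, (m < n.*2)%N -> c m * ee n pi K m = c m + 2 * \sum_(0 <= l < m) c l.
Proof.
move=> hp hdb; elim=> [|m IH] hm; first by rewrite big_geq //= mulr1 mulr0 addr0.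
rewrite /= (negbTE (hp m.+1 (ltac:(lia)))) big_nat_recr //=.
have h1 := hdb m.+1 (ltac:(lia)); rewrite /= in h1.
have h2 := IH (ltac:(lia)).
set p := pi (st n m.+1) in h1 *.
have hp0 : p != 0 by apply: hp; lia.
rewrite mulrA -[RHS](mulfK hp0); congr (_ / p).
set A := c m.+1 in h1 *; set e := ee n pi K m in h2 *.
set S := \sum_(0 <= l < m) c l in h2 *.
have -> : A * (1 + (1 - p) * e) = A + (A * (1 - p)) * e by ring.
rewrite h1.
have -> : c m * p * e = p * (c m * e) by ring.
rewrite h2; lra.
Qed.
Lemma amgm2 (R : realType) (x y : R) : 0 < x -> 0 < y -> 2 <= x / y + y / x.
Proof.
move=> hx hy.
have -> : x / y + y / x = 2 + (x - y) ^+ 2 / (x * y).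
  by field; apply/andP; split; rewrite gt_eqF.
rewrite lerDl; apply: divr_ge0; [exact: sqr_ge0| exact: mulr_ge0 (ltW hx) (ltW hy)].
Qed.
Lemma rev_half (R : realType) n (F : nat -> R) :
  \sum_(0 <= l < n) F (n.*2.-1 - l)%N = \sum_(n <= l < n.*2) F l.
Proof.
rewrite [RHS]big_nat_rev /=.
have := big_addn 0 n.*2 n predT (fun i => F (n + n.*2 - i.+1)%N).
rewrite add0n => ->.
have -> : (n.*2 - n = n)%N by lia.
apply: eq_big_nat => i hi; congr F; lia.
Qed.
Lemma gR0 (R : realType) n (pi : int -> R) K :
  gR n pi K 0 = \sum_(n <= m < n.*2) ee n pi K m.
Proof.
rewrite /gR (big_cat_nat (n:=n)) //=; last lia.
rewrite big_nat_cond big1 ?add0r; last first.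
  by move=> i /andP[/andP[_ h] c]; exfalso; lia.
rewrite big_nat_cond [RHS]big_nat_cond; apply: eq_bigl => i.
rewrite lez_nat; case: (n <= i)%N; rewrite ?andbT ?andbF //.
Qed.
Lemma st_opp n k : (k <= n.*2)%N -> - st n k = st n (n.*2 - k).
Proof. rewrite /st => hk; lia. Qed.
Lemma half_bound (R : realType) n (pi : int -> R) K (c : nat -> R) :
  (forall k, (0 < k < n.*2)%N -> pi (st n k) != 0) ->
  (forall k, (0 < k < n.*2)%N -> c k * (1 - pi (st n k)) = c k.-1 * pi (st n k)) ->
  (forall m, (m < n.*2)%N -> 0 < c m) ->
  \sum_(n <= m < n.*2) 2 * (\sum_(0 <= l < n) c l) / c m <= gR n pi K 0.
Proof.
move=> hp hdb hc; rewrite gR0; apply: ler_sum_nat => m /andP[h1 h2].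
have hf := ee_formula K hp hdb h2.
have hcm := hc m h2.
rewrite ler_pdivrMr // [ee _ _ _ m * _]mulrC hf.
have : \sum_(0 <= l < n) c l <= \sum_(0 <= l < m) c l.
  rewrite (@big_cat_nat _ _ _ n 0 m) //= lerDl.
  rewrite big_seq; apply: sumr_ge0 => l; rewrite mem_index_iota => hl.
  apply: ltW; apply: hc; lia.
lra.
Qed.
Lemma pos_case (R : realType) n (pi : int -> R) : (0 < n)%N -> piok n pi ->
  (forall k, (0 < k < n.*2)%N -> 0 < pi (st n k) < 1) ->
  4 * n%:R ^+ 2 <= gR n pi 1 0 + gR n (piR pi) 1 0.
Proof.
move=> hn hp hpos.
pose c m := \prod_(1 <= l < m.+1) (pi (st n l) / (1 - pi (st n l))).
have hcpos : forall m, (m < n.*2)%N -> 0 < c m.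
  move=> m hm; rewrite /c big_seq_cond; apply: prodr_gt0 => l /andP[hl _].
  rewrite mem_index_iota in hl; have /andP[a b] := hpos l (ltac:(lia)).
  by apply: divr_gt0 => //; rewrite subr_gt0.
have hp0 : forall k, (0 < k < n.*2)%N -> pi (st n k) != 0.
  by move=> k hk; have /andP[a _] := hpos k hk; rewrite gt_eqF.
have hdb : forall k, (0 < k < n.*2)%N -> c k * (1 - pi (st n k)) = c k.-1 * pi (st n k).
  move=> [|k] hk; first by exfalso; lia.
  have /andP[a b] := hpos k.+1 hk.
  rewrite /c big_nat_recr //= -mulrA divfK //; by rewrite subr_eq0 eq_sym lt_eqF.
have b1 := half_bound 1 hp0 hdb hcpos.
pose c' m := c (n.*2.-1 - m)%N.
have hp0' : forall k, (0 < k < n.*2)%N -> piR pi (st n k) != 0.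
  move=> k hk; rewrite /piR st_opp; last lia.
  have /andP[a b] : 0 < pi (st n (n.*2 - k)) < 1 by apply: hpos; lia.
  by rewrite subr_eq0 eq_sym lt_eqF.
have hdb' : forall k, (0 < k < n.*2)%N ->
    c' k * (1 - piR pi (st n k)) = c' k.-1 * piR pi (st n k).
  move=> k hk; rewrite /piR st_opp; last lia.
  have : c (n.*2 - k)%N * (1 - pi (st n (n.*2 - k))) = c (n.*2 - k)%N.-1 * pi (st n (n.*2 - k)).
    by apply: hdb; lia.
  rewrite /c' (_ : (n.*2.-1 - k = (n.*2 - k).-1)%N); last lia.
  rewrite (_ : (n.*2.-1 - k.-1 = (n.*2 - k))%N); last lia.
  move=> ->; ring.
have hc' : forall m, (m < n.*2)%N -> 0 < c' m by move=> m hm; apply: hcpos; lia.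
have b2 := half_bound 1 hp0' hdb' hc'.
rewrite /c' rev_half in b2.
set A := \sum_(0 <= l < n) c l in b1.
set B := \sum_(n <= l < n.*2) c l in b2.
have e2 : \sum_(n <= m < n.*2) 2 * B / c (n.*2.-1 - m)%N = \sum_(0 <= l < n) 2 * B / c l.
  rewrite -(rev_half n (fun m => 2 * B / c (n.*2.-1 - m)%N)).
  by apply: eq_big_nat => l hl; congr (_ / c _); lia.
rewrite e2 in b2.
suff : 4 * n%:R ^+ 2 <= \sum_(n <= m < n.*2) 2 * A / c m + \sum_(0 <= l < n) 2 * B / c l.
  move=> h; lra.
have -> : \sum_(n <= m < n.*2) 2 * A / c m + \sum_(0 <= l < n) 2 * B / c l =
   2 * \sum_(0 <= l < n) \sum_(n <= m < n.*2) (c l / c m + c m / c l).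
  rewrite [in RHS]mulr_sumr.
  under [X in _ = X]eq_bigr do rewrite big_split /= mulrDr.
  rewrite big_split /=; congr (_ + _).
    rewrite [RHS](eq_bigr (fun l => \sum_(n <= m < n.*2) 2 * (c l / c m))); last first.
      by move=> l _; rewrite mulr_sumr.
    rewrite exchange_big /=; apply: eq_bigr => m _.
    by rewrite /A -mulrA mulr_suml mulr_sumr; apply: eq_bigr => l _; rewrite mulrA.
  apply: eq_bigr => l _; rewrite /B -mulrA mulr_suml mulr_sumr.
  by apply: eq_bigr => m _; rewrite mulrA.
apply: le_trans (_ : 2 * \sum_(0 <= l < n) \sum_(n <= m < n.*2) (2 : R) <= _).
  have hnn : (n.*2 - n = n)%N by lia.
  rewrite sumr_const_nat sumr_const_nat hnn.
  rewrite subn0 -[(2:R) *+ n]mulr_natr -[(2 * n%:R) *+ n]mulr_natr.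
  rewrite le_eqVlt; apply/orP; left; apply/eqP; rewrite expr2; ring.
rewrite ler_pM2l //; apply: ler_sum_nat => l hl; apply: ler_sum_nat => m hm.
apply: amgm2; apply: hcpos; lia.
Qed.
Theorem corollary1 (R : realType) (n : nat) (pi : int -> R) :
  (0 < n)%N ->
  (forall i : int, - n%:Z < i < n%:Z -> 0 <= pi i <= 1) ->
  ((2 / 3 * (n%:R) ^+ 2 : R)%:E <=
    Order.max (expected_hitting_time n pi 0 n%:Z)
              (expected_hitting_time n pi 0 (- n%:Z)))%E.
Proof.
move=> hn hp0.
have hp : piok n pi by [].
have hp' := piR_ok hp.
have EL : expected_hitting_time n pi 0 (- n%:Z) = expected_hitting_time n (piR pi) 0 n%:Z.
  by rewrite -ET_sym // opprK.
rewrite EL.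
set V : R := 2 / 3 * n%:R ^+ 2.
have hV : 0 <= V by rewrite /V; apply: mulr_ge0 => //; apply: sqr_ge0.
have okR : forall K, 0 <= K -> V <= gR n pi K 0 ->
    ((V)%:E <= Order.max (expected_hitting_time n pi 0 n%:Z)
              (expected_hitting_time n (piR pi) 0 n%:Z))%E.
  move=> K hK hle; rewrite le_max; apply/orP; left.
  apply: le_trans (ER_bound hn hp hK); by rewrite lee_fin.
have okL : forall K, 0 <= K -> V <= gR n (piR pi) K 0 ->
    ((V)%:E <= Order.max (expected_hitting_time n pi 0 n%:Z)
              (expected_hitting_time n (piR pi) 0 n%:Z))%E.
  move=> K hK hle; rewrite le_max; apply/orP; right.
  apply: le_trans (ER_bound hn hp' hK); by rewrite lee_fin.
case: (pselect (exists m0, (0 < m0 < n.*2)%N /\ pi (st n m0) = 0 /\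
          ~ (exists l, (m0 < l <= n)%N /\ pi (st n l) = 1))) => [[m0 [h1 [h2 h3]]]|nA].
  have [K [hK hle]] : exists K, 0 <= K /\ V <= gR n pi K 0.
    apply: (degen hn hp h1 h2) => // l hl; apply/eqP => h; apply: h3; by exists l.
  exact: okR hK hle.
case: (pselect (exists m0, (0 < m0 < n.*2)%N /\ piR pi (st n m0) = 0 /\
          ~ (exists l, (m0 < l <= n)%N /\ piR pi (st n l) = 1))) => [[m0 [h1 [h2 h3]]]|nB].
  have [K [hK hle]] : exists K, 0 <= K /\ V <= gR n (piR pi) K 0.
    apply: (degen hn hp' h1 h2) => // l hl; apply/eqP => h; apply: h3; by exists l.
  exact: okL hK hle.
have nA' : forall m0, (0 < m0 < n.*2)%N -> pi (st n m0) = 0 ->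
    exists l, (m0 < l <= n)%N /\ pi (st n l) = 1.
  move=> m0 h1 h2; case: (pselect (exists l, (m0 < l <= n)%N /\ pi (st n l) = 1)) => // h3.
  by exfalso; apply: nA; exists m0.
have nB' : forall m0, (0 < m0 < n.*2)%N -> pi (st n (n.*2 - m0)) = 1 ->
    exists l, (m0 < l <= n)%N /\ pi (st n (n.*2 - l)) = 0.
  move=> m0 h1 h2.
  case: (pselect (exists l, (m0 < l <= n)%N /\ pi (st n (n.*2 - l)) = 0)) => // h3.
  exfalso; apply: nB; exists m0; split => //; split.
    by rewrite /piR st_opp ?h2 ?subrr //; lia.
  move=> [l [hl1 hl2]]; apply: h3; exists l; split => //.
  move: hl2; rewrite /piR st_opp; last lia.
  move=> h; lra.
have hpos : forall k, (0 < k < n.*2)%N -> 0 < pi (st n k) < 1.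
  move=> k hk; have /andP[a b] : 0 <= pi (st n k) <= 1 by apply: hp; rewrite /st; lia.
  have n0 : pi (st n k) != 0.
    apply/eqP => h0; have [l [hl1 hl2]] := nA' k hk h0.
    have [l' [hl1' hl2']] := nB' (n.*2 - l)%N (ltac:(lia))
      (ltac:(by rewrite (_ : (n.*2 - (n.*2 - l) = l)%N) //; lia)).
    lia.
  have n1 : pi (st n k) != 1.
    apply/eqP => h1.
    have [l' [hl1' hl2']] := nB' (n.*2 - k)%N (ltac:(lia))
      (ltac:(by rewrite (_ : (n.*2 - (n.*2 - k) = k)%N) //; lia)).
    have [l [hl1 hl2]] := nA' (n.*2 - l')%N (ltac:(lia)) hl2'.
    lia.
  by rewrite !lt_def n0 a eq_sym n1 b.
have hsum := pos_case hn hp hpos.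
case: (lerP V (gR n pi 1 0)) => h; first exact: okR ler01 h.
apply: (okL 1 ler01).
have : 0 <= n%:R ^+ 2 :> R by apply: sqr_ge0.
rewrite /V in h *; lra.
Qed.
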